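(* Let $p\in[1,\infty]$, $W^{(1)}\in\mathbb{R}^{n_1\times n_0}$, $W^{(2)}\in\mathbb{R}^{n_2\times n_1}$, and let $\alpha,\beta\in\mathbb{R}^{n_1}$ satisfy $0\le\alpha_i\le\beta_i<\infty$ for all $i$. For $d\in\mathbb{R}^{n_1}_+$ define $$L(d)=\|W^{(2)}\|_p\,\big\|\mathrm{diag}\big(\max(|\beta-d|,|d-\alpha|)\big)W^{(1)}\big\|_p+\|W^{(2)}\mathrm{diag}(d)W^{(1)}\|_p,$$ with $\max$ and $|\cdot|$ taken elementwise. Then $L(\beta/2)\le L(0)$.
   Context: $\|A\|_p=\sup_{\|x\|_p\le1}\|Ax\|_p$ denotes the induced operator norm of a matrix $A$. (In the paper, $L(d)$ is a Lipschitz constant of the two-layer network $x\mapsto W^{(2)}\sigma(W^{(1)}x)$ whose activations $\sigma_i$ are slope-restricted in $[\alpha_i,\beta_i]$, and $L(0)=\|W^{(2)}\|_p\|\mathrm{diag}(\beta)W^{(1)}\|_p$ is the naive bound.) *)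

(* Defs.v *)
From HB Require Import structures.
From mathcomp Require Import all_boot all_order all_algebra.
From mathcomp Require Import all_classical all_reals all_analysis.
Set Implicit Arguments. Unset Strict Implicit. Unset Printing Implicit Defensive.
Import Order.TTheory GRing.Theory Num.Theory.
Local Open Scope ring_scope.
Local Open Scope classical_set_scope.

Definition vnorm (R : realType) (n : nat) (p : \bar R) (x : 'cV[R]_n) : R :=
  match p with
  | EFin q => (\sum_(i < n) `|x i 0| `^ q) `^ q^-1
  | +oo%E => \big[Num.max/0]_(i < n) `|x i 0|
  | -oo%E => 0
  end.

Definition opnorm (R : realType) (m n : nat) (p : \bar R) (A : 'M[R]_(m, n)) : R :=
  sup [set vnorm p (A *m x) | x in [set x : 'cV[R]_n | vnorm p x <= 1]].

Definition Lbound (R : realType) (n0 n1 n2 : nat) (p : \bar R)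
  (W1 : 'M[R]_(n1, n0)) (W2 : 'M[R]_(n2, n1)) (alpha beta d : 'rV[R]_n1) : R :=
  opnorm p W2 *
    opnorm p (diag_mx (\row_i Num.max `|beta 0 i - d 0 i| `|d 0 i - alpha 0 i|) *m W1)
  + opnorm p (W2 *m diag_mx d *m W1).

(* Main.v *)
Require Import Defs.
From HB Require Import structures.
From mathcomp Require Import all_boot all_order all_algebra.
From mathcomp Require Import all_classical all_reals all_analysis.
From mathcomp Require Import ring lra.
Import Order.TTheory GRing.Theory Num.Theory.
Local Open Scope ring_scope.

Section Aux.
Context {R : realType}.


Lemma p_cases {p : \bar R} : (1 <= p)%E ->
  (exists2 q : R, p = q%:E & 1 <= q) \/ p = +oo%E.
Proof.
case: p => [q| |] hp; last by rewrite leeNy_eq in hp.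
- by left; exists q => //; rewrite -lee_fin.
- by right.
Qed.

Lemma vnorm_ge0 {p} (hp : (1 <= p)%E) {n} (x : 'cV[R]_n) : 0 <= vnorm p x.
Proof.
case: (p_cases hp) => [[q -> _]|->] /=; first exact: powR_ge0.
by elim/big_ind: _ => // a b ha _; rewrite le_max ha.
Qed.

Lemma vnorm_coord {p} (hp : (1 <= p)%E) {n} (x : 'cV[R]_n) i : `|x i 0| <= vnorm p x.
Proof.
case: (p_cases hp) => [[q -> q1]|->] /=; last exact: le_bigmax.
have q0 : q != 0 by rewrite gt_eqF // (lt_le_trans ltr01).
rewrite -{1}(@powRr1 _ `|x i 0|) // -(mulfV q0) powRrM.
apply: ge0_ler_powR; rewrite ?nnegrE ?invr_ge0 ?powR_ge0 //.
- by rewrite (le_trans ler01).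
- by apply: sumr_ge0 => j _; rewrite powR_ge0.
rewrite (bigD1 i) //= lerDl sumr_ge0 // => j _; exact: powR_ge0.
Qed.

Lemma vnorm_mono {p} (hp : (1 <= p)%E) {n} (y z : 'cV[R]_n) :
  (forall i, `|y i 0| <= `|z i 0|) -> vnorm p y <= vnorm p z.
Proof.
move=> yz; case: (p_cases hp) => [[q -> q1]|->] /=; last exact: le_bigmax2.
have q0 : 0 <= q by rewrite (le_trans ler01).
apply: ge0_ler_powR; rewrite ?nnegrE ?invr_ge0 //.
- by apply: sumr_ge0 => j _; rewrite powR_ge0.
- by apply: sumr_ge0 => j _; rewrite powR_ge0.
apply: ler_sum => i _; apply: ge0_ler_powR; rewrite ?nnegrE //.
Qed.

Lemma vnormZ {p} (hp : (1 <= p)%E) {n} (x : 'cV[R]_n) c : 0 <= c ->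
  vnorm p (c *: x) = c * vnorm p x.
Proof.
move=> c0; case: (p_cases hp) => [[q -> q1]|->] /=.
  have q0 : q != 0 by rewrite gt_eqF // (lt_le_trans ltr01).
  under eq_bigr => i _ do rewrite mxE normrM (ger0_norm c0) powRM //.
  rewrite -mulr_sumr powRM ?powR_ge0 ?sumr_ge0 //.
  by rewrite -powRrM mulfV // powRr1.
under eq_bigr => i _ do rewrite mxE normrM (ger0_norm c0).
rewrite (big_morph (fun x => c * x) (id1 := 0) (op1 := Num.max)) ?mulr0 //.
by move=> a b; rewrite maxr_pMr.
Qed.

Lemma vnorm0 {p} (hp : (1 <= p)%E) {n} : vnorm p (0 : 'cV[R]_n) = 0.
Proof. by rewrite -(scale0r (0 : 'cV[R]_n)) vnormZ // mul0r. Qed.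

Definition OS p {m n} (A : 'M[R]_(m, n)) :=
  [set vnorm p (A *m x) | x in [set x : 'cV[R]_n | vnorm p x <= 1]]%classic.

Lemma OS_has_sup {p} (hp : (1 <= p)%E) {m n} (A : 'M[R]_(m, n)) : has_sup (OS p A).
Proof.
split.
  exists (vnorm p (A *m 0)); exists 0 => //=; rewrite vnorm0 //.
exists (vnorm p (\col_i \sum_j `|A i j|)) => _ [x hx <-].
apply: vnorm_mono => // i; rewrite !mxE [X in _ <= X]ger0_norm; last first.
  by apply: sumr_ge0 => j _.
apply: le_trans; first exact: ler_norm_sum.
apply: ler_sum => j _.
rewrite normrM ler_piMr //; exact: (le_trans (vnorm_coord hp x j) hx).
Qed.

Lemma opnorm_ub {p} (hp : (1 <= p)%E) {m n} (A : 'M[R]_(m, n)) x :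
  vnorm p x <= 1 -> vnorm p (A *m x) <= opnorm p A.
Proof.
move=> hx; apply: (sup_upper_bound (OS_has_sup hp A)); by exists x.
Qed.

Lemma opnorm_le {p} (hp : (1 <= p)%E) {m n} (A : 'M[R]_(m, n)) M :
  (forall x, vnorm p x <= 1 -> vnorm p (A *m x) <= M) -> opnorm p A <= M.
Proof.
move=> H; apply: ge_sup; first exact: (OS_has_sup hp A).1.
by move=> _ [x hx <-]; apply: H.
Qed.

Lemma opnorm_ge0 {p} (hp : (1 <= p)%E) {m n} (A : 'M[R]_(m, n)) : 0 <= opnorm p A.
Proof.
apply: (le_trans (vnorm_ge0 hp (A *m 0))); apply: opnorm_ub.
by []. by rewrite vnorm0 // ler01.
Qed.

Lemma opnorm_mul {p} (hp : (1 <= p)%E) {m n} (A : 'M[R]_(m, n)) y :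
  vnorm p (A *m y) <= opnorm p A * vnorm p y.
Proof.
have [t0|] := eqVneq (vnorm p y) 0.
  have -> : y = 0.
    apply/matrixP => i j; rewrite (ord1 j) mxE; apply/eqP.
    by rewrite -normr_le0 -t0 vnorm_coord.
  by rewrite mulmx0 vnorm0 // vnorm0 // mulr0.
move=> tn0; have t0 : 0 < vnorm p y by rewrite lt_neqAle eq_sym tn0 vnorm_ge0.
have hz : vnorm p ((vnorm p y)^-1 *: y) = 1.
  by rewrite vnormZ // ?invr_ge0 ?(ltW t0) // mulVf.
have ey : y = vnorm p y *: ((vnorm p y)^-1 *: y) by rewrite scalerA mulfV // scale1r.
rewrite {1}ey -scalemxAr vnormZ ?(ltW t0) // [_ * vnorm p y]mulrC ler_pM2l //.
by apply: opnorm_ub => //; rewrite hz.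
Qed.

End Aux.

Theorem theorem1 (R : realType) (n0 n1 n2 : nat) (p : \bar R)
  (hp : (1 <= p)%E)
  (W1 : 'M[R]_(n1, n0)) (W2 : 'M[R]_(n2, n1)) (alpha beta : 'rV[R]_n1)
  (halpha : forall i, 0 <= alpha 0 i)
  (halphabeta : forall i, alpha 0 i <= beta 0 i) :
  Lbound p W1 W2 alpha beta ((2 : R)^-1 *: beta) <= Lbound p W1 W2 alpha beta 0.
Proof.
rewrite /Lbound.
set c : R := 2^-1.
have c0 : 0 <= c by rewrite /c invr_ge0.
have hb : forall i, 0 <= beta 0 i by move=> i; exact: le_trans (halpha i) (halphabeta i).
have E1 : (\row_i Num.max `|beta 0 i - (c *: beta) 0 i| `|(c *: beta) 0 i - alpha 0 i|)
          = c *: beta.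
  apply/rowP => i; rewrite !mxE.
  have e : beta 0 i - c * beta 0 i = c * beta 0 i.
    by rewrite /c; field.
  rewrite e ger0_norm ?mulr_ge0 //; apply/max_idPl.
  have := halpha i; have := halphabeta i; have := hb i; rewrite /c => *.
  rewrite ler_norml; apply/andP; split; lra.
have E0 : (\row_i Num.max `|beta 0 i - (0 : 'rV[R]_n1) 0 i| `|(0 : 'rV[R]_n1) 0 i - alpha 0 i|)
          = beta.
  apply/rowP => i; rewrite !mxE subr0 sub0r normrN !ger0_norm //.
  exact/max_idPl.
rewrite E1 E0.
set B := diag_mx beta *m W1.
have EB : diag_mx (c *: beta) *m W1 = c *: B.
  apply/matrixP => i j; rewrite /B !mul_diag_mx !mxE mulrA //.
have EW : W2 *m diag_mx (c *: beta) *m W1 = W2 *m (c *: B) by rewrite -mulmxA EB.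
rewrite EB EW.
have h1 : opnorm p (c *: B) <= c * opnorm p B.
  apply: opnorm_le => // x hx; rewrite -scalemxAl vnormZ //.
  by rewrite ler_wpM2l // opnorm_ub.
have h2 : opnorm p (W2 *m (c *: B)) <= opnorm p W2 * (c * opnorm p B).
  apply: opnorm_le => // x hx; rewrite -mulmxA.
apply: (le_trans (opnorm_mul hp W2 (c *: B *m x))).
  rewrite ler_wpM2l ?opnorm_ge0 //.
  apply: le_trans h1; exact: opnorm_ub.
have h3 := opnorm_ge0 hp (W2 *m diag_mx 0 *m W1).
have h4 := opnorm_ge0 hp W2.
have h5 : opnorm p W2 * opnorm p (c *: B) <= opnorm p W2 * (c * opnorm p B).
  by rewrite ler_wpM2l.
set a := opnorm p W2 in h2 h4 h5 *.
set b := opnorm p B in h1 h2 h5 *.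
have e : a * (c * b) + a * (c * b) = a * b by rewrite /c; field.
apply: le_trans (lerD h5 h2) _; rewrite e lerDl //.
Qed.
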